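(* Let $U$ be a commutative supertropical monoid with distinguished idempotent $e$. Then $U$ is a semiring (with respect to the addition defined below) if and only if the following condition holds: (Dis) for all $x,y,z\in U$: if $0<ex<ey$ and $exz=eyz$, then $yz=eyz$ (i.e. $yz\in eU$). In this case the semiring $U$ is a supertropical semiring.
   Context: A bipotent semiring is a commutative monoid $(M,\cdot)$ with absorbing element $0$, equipped with a total order compatible with multiplication ($x\le y\Rightarrow xz\le yz$) in which $0$ is the least element; its addition is $x+y=\max(x,y)$. A supertropical monoid is a monoid $(U,\cdot)$ with an absorbing element $0$ and a distinguished central idempotent $e$ such that $ex=0$ implies $x=0$, together with a total ordering on the submonoid $M:=eU$ compatible with multiplication, making $M$ a bipotent semiring (the ghost ideal). On a supertropical monoid $U$ define the addition $x+y:=y$ if $ex<ey$, $x+y:=x$ if $ex>ey$, and $x+y:=ex$ if $ex=ey$. One says $U$ ''is a semiring'' if this addition is associative and multiplication distributes over it. A supertropical semiring is a semiring $U$ in which $e:=1+1$ is idempotent, $eU$ is bipotent (sums of elements of $eU$ lie in $\{x,y\}$), and for all $x,y$: $x+y=ex$ if $ex=ey$, and $x+y\in\{x,y\}$ otherwise. *)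

(* Defs.v *)
From Stdlib Require Import Bool.

Section Supertropical.
Variables (U : Type) (mul : U -> U -> U) (one zero e : U) (le : U -> U -> bool).

Local Notation "x * y" := (mul x y).

Definition lt (a b : U) : bool := le a b && negb (le b a).

(* A commutative supertropical monoid (U, *, 1, 0) with distinguished
   idempotent e and a total order [le] on the ghost ideal M = eU
   (elements of M are exactly those of the form e*x, since e is idempotent;
   [le] is only constrained on M). *)
Record comm_supertropical_monoid : Prop := {
  mulA : forall x y z, x * (y * z) = (x * y) * z;
  mulC : forall x y, x * y = y * x;
  mul1x : forall x, one * x = x;
  mul0x : forall x, zero * x = zero;
  e_idem : e * e = e;
  e_faithful : forall x, e * x = zero -> x = zero;
  le_refl : forall x, le (e * x) (e * x) = true;
  le_antisym : forall x y, le (e * x) (e * y) = true -> le (e * y) (e * x) = true ->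
                 e * x = e * y;
  le_trans : forall x y z, le (e * x) (e * y) = true -> le (e * y) (e * z) = true ->
                 le (e * x) (e * z) = true;
  le_total : forall x y, le (e * x) (e * y) || le (e * y) (e * x) = true;
  le_mul : forall x y z, le (e * x) (e * y) = true ->
             le ((e * x) * (e * z)) ((e * y) * (e * z)) = true;
  le0 : forall x, le zero (e * x) = true
}.

Definition st_add (x y : U) : U :=
  if le (e * x) (e * y) then
    (if le (e * y) (e * x) then e * x else y)
  else x.

Definition st_is_semiring : Prop :=
  (forall x y z, st_add x (st_add y z) = st_add (st_add x y) z) /\
  (forall x y z, z * st_add x y = st_add (z * x) (z * y)) /\
  (forall x y z, st_add x y * z = st_add (x * z) (y * z)).

Definition Dis : Prop :=
  forall x y z, lt zero (e * x) = true -> lt (e * x) (e * y) = true ->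
    (e * x) * z = (e * y) * z -> y * z = (e * y) * z.

End Supertropical.

Record is_comm_semiring (U : Type) (add mul : U -> U -> U) (zero one : U) : Prop := {
  sr_addA : forall x y z, add x (add y z) = add (add x y) z;
  sr_addC : forall x y, add x y = add y x;
  sr_add0 : forall x, add zero x = x;
  sr_mulA : forall x y z, mul x (mul y z) = mul (mul x y) z;
  sr_mulC : forall x y, mul x y = mul y x;
  sr_mul1 : forall x, mul one x = x;
  sr_mul0 : forall x, mul zero x = zero;
  sr_mulDl : forall x y z, mul (add x y) z = add (mul x z) (mul y z);
  sr_mulDr : forall x y z, mul z (add x y) = add (mul z x) (mul z y)
}.

Definition is_supertropical_semiring (U : Type) (add mul : U -> U -> U) (zero one : U) : Prop :=
  let e := add one one in
  is_comm_semiring U add mul zero one /\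
  mul e e = e /\
  (forall x y, add (mul e x) (mul e y) = mul e x \/ add (mul e x) (mul e y) = mul e y) /\
  (forall x y, mul e x = mul e y -> add x y = mul e x) /\
  (forall x y, mul e x <> mul e y -> add x y = x \/ add x y = y).

(* Main.v *)
Require Import Defs.
From Stdlib Require Import Bool Setoid.

Ltac base_facts HU :=
  let mA := fresh "mA" in let mC := fresh "mC" in let m1 := fresh "m1" in
  let m0 := fresh "m0" in let eI := fresh "eI" in let eF := fresh "eF" in
  let lR := fresh "lR" in let lAs := fresh "lAs" in let lTr := fresh "lTr" in
  let lTo := fresh "lTo" in let lM := fresh "lM" in let l0 := fresh "l0" in
  destruct HU as [mA mC m1 m0 eI eF lR lAs lTr lTo lM l0].

Lemma eex U mul one zero e le (HU : comm_supertropical_monoid U mul one zero e le) :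
  forall x, mul e (mul e x) = mul e x.
Proof. intros x. destruct HU as [mA mC m1 m0 eI eF lR lAs lTr lTo lM l0]. rewrite mA, eI. reflexivity. Qed.

Lemma ezero U mul one zero e le (HU : comm_supertropical_monoid U mul one zero e le) :
  mul e zero = zero.
Proof. destruct HU as [mA mC m1 m0 eI eF lR lAs lTr lTo lM l0]. rewrite mC, m0. reflexivity. Qed.

Lemma e_add U mul one zero e le (HU : comm_supertropical_monoid U mul one zero e le) :
  forall x y, mul e (st_add U mul e le x y) =
    if le (mul e x) (mul e y) then mul e y else mul e x.
Proof.
  intros x y. pose proof (eex _ _ _ _ _ _ HU) as E. destruct HU as [mA mC m1 m0 eI eF lR lAs lTr lTo lM l0].
  unfold st_add. destruct (le (mul e x) (mul e y)) eqn:H1;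
  destruct (le (mul e y) (mul e x)) eqn:H2; auto.
  rewrite E. apply lAs; auto.
Qed.

Lemma le_mulz U mul one zero e le (HU : comm_supertropical_monoid U mul one zero e le) :
  forall x y z, le (mul e x) (mul e y) = true ->
    le (mul e (mul z x)) (mul e (mul z y)) = true.
Proof.
  intros x y z H. pose proof (eex _ _ _ _ _ _ HU) as E. destruct HU as [mulA0 mC m1 m0 eI eF lR lAs lTr lTo le_mul0 l0].
  assert (K : forall a, mul (mul e a) (mul e z) = mul e (mul z a)).
  { intros a. rewrite <- (mulA0 e a (mul e z)). rewrite (mC a (mul e z)).
    rewrite <- (mulA0 e z a). apply E. }
  rewrite <- !K. apply le_mul0. exact H.
Qed.

Ltac contra lTr lTo :=
  match goal with
  | H1 : ?le (?mul ?e ?a) (?mul ?e ?b) = true,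
    H2 : ?le (?mul ?e ?b) (?mul ?e ?c) = true,
    H3 : ?le (?mul ?e ?a) (?mul ?e ?c) = false |- _ =>
      rewrite (lTr a b c H1 H2) in H3; discriminate
  | H1 : ?le (?mul ?e ?a) (?mul ?e ?b) = false,
    H2 : ?le (?mul ?e ?b) (?mul ?e ?a) = false |- _ =>
      let Ht := fresh in pose proof (lTo a b) as Ht; rewrite H1, H2 in Ht; discriminate
  end.

Lemma st_assoc U mul one zero e le (HU : comm_supertropical_monoid U mul one zero e le) :
  forall x y z, st_add U mul e le x (st_add U mul e le y z) =
                st_add U mul e le (st_add U mul e le x y) z.
Proof.
  intros x y z. pose proof (eex _ _ _ _ _ _ HU) as E.
  pose proof (e_add _ _ _ _ _ _ HU y z) as es.
  pose proof (e_add _ _ _ _ _ _ HU x y) as et.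
  destruct HU as [mA mC m1 m0 eI eF lR lAs lTr lTo lM l0].
  set (s := st_add U mul e le y z) in *.
  set (t := st_add U mul e le x y) in *.
  unfold st_add at 1 2. rewrite es, et.
  destruct (le (mul e x) (mul e y)) eqn:Hxy;
  destruct (le (mul e y) (mul e x)) eqn:Hyx;
  destruct (le (mul e y) (mul e z)) eqn:Hyz;
  destruct (le (mul e z) (mul e y)) eqn:Hzy;
  destruct (le (mul e x) (mul e z)) eqn:Hxz;
  destruct (le (mul e z) (mul e x)) eqn:Hzx;
  try (contra lTr lTo);
  unfold s, t, st_add;
  repeat (rewrite ?Hxy, ?Hyx, ?Hyz, ?Hzy, ?Hxz, ?Hzx, ?lR, ?E; cbv iota);
  try reflexivity;
  repeat match goal with
  | H1 : le (mul e ?a) (mul e ?b) = true, H2 : le (mul e ?b) (mul e ?a) = true |- _ =>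
     let Q := fresh in pose proof (lAs a b H1 H2) as Q; clear H1 H2
  end; try congruence.
Qed.

Lemma dis_aux U mul one zero e le (HU : comm_supertropical_monoid U mul one zero e le) :
  Dis U mul zero e le -> forall x y z,
  le (mul e x) (mul e y) = true -> le (mul e y) (mul e x) = false ->
  mul e (mul z x) = mul e (mul z y) -> mul z y = mul e (mul z y).
Proof.
  intros D x y z H1 H2 H3. pose proof (ezero _ _ _ _ _ _ HU) as Z.
  destruct HU as [mA mC m1 m0 eI eF lR lAs lTr lTo lM l0].
  destruct (le (mul e x) zero) eqn:H4.
  - assert (ex : mul e x = zero).
    { rewrite <- Z. apply lAs. rewrite Z; exact H4. rewrite Z; apply l0. }
    assert (x0 : x = zero) by (apply eF; exact ex).
    subst x. rewrite (mC z zero), m0, Z in H3.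
    assert (zy : mul z y = zero) by (apply eF; symmetry; exact H3).
    rewrite zy, Z. reflexivity.
  - assert (K : mul y z = mul (mul e y) z).
    { unfold Dis in D; apply (D x y z).
      - unfold lt. rewrite H4, l0. reflexivity.
      - unfold lt. rewrite H1, H2. reflexivity.
      - rewrite <- !mA, (mC x z), (mC y z). exact H3. }
    rewrite (mC z y). rewrite K at 1. rewrite <- mA. reflexivity.
Qed.

Lemma st_distr U mul one zero e le (HU : comm_supertropical_monoid U mul one zero e le) :
  Dis U mul zero e le -> forall x y z,
  mul z (st_add U mul e le x y) = st_add U mul e le (mul z x) (mul z y).
Proof.
  intros D x y z.
  pose proof (dis_aux _ _ _ _ _ _ HU D) as DA.
  pose proof (le_mulz _ _ _ _ _ _ HU) as LM.
  destruct HU as [mA mC m1 m0 eI eF lR lAs lTr lTo lM l0].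
  unfold st_add.
  destruct (le (mul e x) (mul e y)) eqn:H1;
  destruct (le (mul e y) (mul e x)) eqn:H2.
  - rewrite (LM _ _ z H1), (LM _ _ z H2).
    rewrite mA, (mC z e), <- mA. reflexivity.
  - rewrite (LM _ _ z H1).
    destruct (le (mul e (mul z y)) (mul e (mul z x))) eqn:H3; [|reflexivity].
    assert (Q : mul e (mul z x) = mul e (mul z y)) by (apply lAs; auto).
    rewrite Q. apply (DA x y z H1 H2 Q).
  - rewrite (LM _ _ z H2).
    destruct (le (mul e (mul z x)) (mul e (mul z y))) eqn:H3; [|reflexivity].
    assert (Q : mul e (mul z y) = mul e (mul z x)) by (apply lAs; auto).
    apply (DA y x z H2 H1 Q).
  - pose proof (lTo x y) as T. rewrite H1, H2 in T. discriminate.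
Qed.

Lemma st_comm U mul one zero e le (HU : comm_supertropical_monoid U mul one zero e le) :
  forall x y, st_add U mul e le x y = st_add U mul e le y x.
Proof.
  intros x y. destruct HU as [mA mC m1 m0 eI eF lR lAs lTr lTo lM l0].
  unfold st_add.
  destruct (le (mul e x) (mul e y)) eqn:H1;
  destruct (le (mul e y) (mul e x)) eqn:H2; auto.
  pose proof (lTo x y) as T. rewrite H1, H2 in T. discriminate.
Qed.

Lemma semiring_dis U mul one zero e le (HU : comm_supertropical_monoid U mul one zero e le) :
  st_is_semiring U mul e le -> Dis U mul zero e le.
Proof.
  intros [_ [_ R]] x y z _ Hlt Heq.
  destruct HU as [mA mC m1 m0 eI eF lR lAs lTr lTo lM l0].
  pose proof (R x y z) as Rz. unfold lt in Hlt.
  apply andb_prop in Hlt. destruct Hlt as [H1 H2]. apply negb_true_iff in H2.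
  unfold st_add at 1 in Rz. rewrite H1, H2 in Rz.
  rewrite Rz. unfold st_add.
  rewrite <- !mA in Heq. rewrite Heq, lR, mA. reflexivity.
Qed.

Theorem theorem1p2 (U : Type) (mul : U -> U -> U) (one zero e : U)
    (le : U -> U -> bool)
    (HU : comm_supertropical_monoid U mul one zero e le) :
  (st_is_semiring U mul e le <-> Dis U mul zero e le) /\
  (st_is_semiring U mul e le ->
     is_supertropical_semiring U (st_add U mul e le) mul zero one).
Proof.
  pose proof (eex _ _ _ _ _ _ HU) as E.
  pose proof (ezero _ _ _ _ _ _ HU) as Z.
  pose proof (st_comm _ _ _ _ _ _ HU) as C.
  split; [split|].
  - apply semiring_dis with one; exact HU.
  - intros D. split; [|split].
    + apply (st_assoc _ _ _ _ _ _ HU).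
    + intros x y z. apply (st_distr _ _ _ _ _ _ HU D).
    + intros x y z. rewrite !(mulC _ _ _ _ _ _ HU _ z). apply (st_distr _ _ _ _ _ _ HU D).
  - intros [A [Dl Dr]].
    destruct HU as [mA mC m1 m0 eI eF lR lAs lTr lTo lM l0].
    assert (Ee : st_add U mul e le one one = e).
    { unfold st_add. rewrite lR. rewrite mC, m1. reflexivity. }
    unfold is_supertropical_semiring. cbv zeta. rewrite Ee.
    split; [|split; [exact eI|split; [|split]]].
    + constructor; auto.
      intros x. unfold st_add. rewrite Z, l0.
      destruct (le (mul e x) zero) eqn:H; [|reflexivity].
      assert (ex : mul e x = zero).
      { rewrite <- Z. apply lAs. rewrite Z; exact H. rewrite Z; apply l0. }
      rewrite <- ex. pose proof (eF x ex) as x0. subst x. rewrite Z. reflexivity.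
    + intros x y. unfold st_add. rewrite !E.
      destruct (le (mul e x) (mul e y)); [destruct (le (mul e y) (mul e x))|]; auto.
    + intros x y H. unfold st_add. rewrite H, lR. reflexivity.
    + intros x y H. unfold st_add.
      destruct (le (mul e x) (mul e y)) eqn:H1;
      destruct (le (mul e y) (mul e x)) eqn:H2; auto.
      exfalso. apply H. apply lAs; auto.
Qed.
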